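(* Let $L$ be a finite-dimensional Lie algebra over a field $F$ which is not two-generated. Then for each maximal subalgebra $M$ of $L$ and each non-zero element $x\in M$ there exists a maximal subalgebra $S$ of $L$ with $S\neq M$ and $x\in S$. If moreover $F$ is infinite, then each element of $L$ lies in infinitely many maximal subalgebras of $L$.
   Context: A Lie algebra is two-generated if it is generated as a Lie algebra by two of its elements. *)

(* Defs.v *)
(* Finite-dimensional Lie algebras over a field F are modelled
   as a finite-dimensional F-vector space V : vectType F together with a
   bracket br : V -> V -> V satisfying the Lie algebra axioms. *)
From HB Require Import structures.
From mathcomp Require Import all_boot all_order all_algebra.
Set Implicit Arguments. Unset Strict Implicit. Unset Printing Implicit Defensive.
Import GRing.Theory.
Local Open Scope ring_scope.

Definition is_lie_bracket (F : fieldType) (V : vectType F) (br : V -> V -> V) : Prop :=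
  [/\ (forall (a : F) (x y z : V), br (a *: x + y) z = a *: br x z + br y z),
      (forall (a : F) (x y z : V), br z (a *: x + y) = a *: br z x + br z y),
      (forall x : V, br x x = 0) &
      (forall x y z : V, br x (br y z) + br y (br z x) + br z (br x y) = 0)].

Definition is_subalg (F : fieldType) (V : vectType F) (br : V -> V -> V)
  (U : {vspace V}) : Prop :=
  forall x y, x \in U -> y \in U -> br x y \in U.

Definition is_max_subalg (F : fieldType) (V : vectType F) (br : V -> V -> V)
  (M : {vspace V}) : Prop :=
  [/\ is_subalg br M, M != fullv &
      forall U : {vspace V}, is_subalg br U -> (M <= U)%VS -> U = M \/ U = fullv].

(* L is two-generated: there are x, y such that the subalgebra generated by
   x, y (the intersection of all subalgebras containing them) is all of L,
   i.e. every subalgebra containing x and y is L. *)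
Definition two_generated (F : fieldType) (V : vectType F) (br : V -> V -> V) : Prop :=
  exists x y : V, forall U : {vspace V},
    is_subalg br U -> x \in U -> y \in U -> U = fullv.

Definition infinite_field (F : fieldType) : Prop :=
  forall s : seq F, exists a : F, a \notin s.

(* Main.v *)
Require Import Defs.
From HB Require Import structures.
From mathcomp Require Import all_boot all_order all_algebra.
From mathcomp Require Import zify.
From Stdlib Require Import Classical.
Set Implicit Arguments. Unset Strict Implicit.
Local Open Scope ring_scope.
Import GRing.Theory.

Lemma count_orb' (T : Type) (p q : pred T) (s : seq T) :
  (count (fun a => p a || q a) s <= count p s + count q s)%N.
Proof. elim: s => //= a s IH; case: (p a); case: (q a) => /=; lia. Qed.

Lemma count_le1 (T : eqType) (P : pred T) (A : seq T) :
  uniq A -> (forall a b, P a -> P b -> a = b) -> (count P A <= 1)%N.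
Proof.
elim: A => //= a A IH /andP[na uA] H.
case Pa: (P a) => /=.
  rewrite (_ : count P A = 0%N) //; apply/eqP; rewrite -leqn0 leqNgt -has_count.
  apply/hasP => -[b bA Pb]; have eab := H _ _ Pa Pb.
  by rewrite eab bA in na.
by rewrite add0n; apply: IH.
Qed.

Lemma distinct_list (F : fieldType) (hF : infinite_field F) n :
  exists A : seq F, uniq A /\ size A = n.
Proof.
elim: n => [|n [A [uA sA]]]; first by exists [::].
case: (hF A) => a ha; exists (a :: A); by rewrite /= ha uA sA.
Qed.

Section S.
Variables (F : fieldType) (V : vectType F) (br : V -> V -> V).

Lemma exists_notin (U : {vspace V}) : U != fullv -> exists z, z \notin U.
Proof.
move=> hU; apply: NNPP => H.
have sub : (fullv <= U)%VS.
  apply/subvP => v _; apply: NNPP => hv; apply: H; exists v; exact/negP.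
by move: hU; rewrite eqEsubv subvf sub.
Qed.

Lemma countQ (y z : V) (A : seq F) (Us : seq {vspace V}) : uniq A ->
  (forall W, W \in Us -> y \notin W) ->
  leq (count (fun a => has (fun W : {vspace V} => z + a *: y \in W) Us) A) (size Us).
Proof.
move=> uA; elim: Us => [|W Us IH] hy /=; first by elim: A {uA}.
apply: (leq_trans (count_orb' _ _ A)).
rewrite -add1n; apply: leq_add.
  apply: count_le1 => // a b ha hb; apply/eqP.
  apply: contraR (hy W (mem_head _ _)) => nab.
  have h1 : (a - b) *: y \in W by have := memvB ha hb; rewrite opprD addrACA subrr add0r -scalerBl.
  have nz : a - b != 0 by rewrite subr_eq0.
  by rewrite -[y](scale1r) -(mulVf nz) -scalerA memvZ.
by apply: IH => W' hW'; apply: hy; rewrite inE hW' orbT.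
Qed.

Lemma avoid (hF : infinite_field F) (Us : seq {vspace V}) :
  (forall U, U \in Us -> U != fullv) -> exists y : V, forall U, U \in Us -> y \notin U.
Proof.
elim: Us => [|U Us IH] hp; first by exists 0 => U; rewrite in_nil.
have [y hy] : exists y, forall U, U \in Us -> y \notin U.
  by apply: IH => W hW; apply: hp; rewrite inE hW orbT.
case yU: (y \in U); last first.
  by exists y => W; rewrite inE => /orP[/eqP->|]; [rewrite yU | exact: hy].
have [z zU] := exists_notin (hp U (mem_head _ _)).
have [A [uA sA]] := distinct_list hF (size Us).+1.
have cQ := countQ z uA hy.
have : ~~ all (fun a => has (fun W : {vspace V} => z + a *: y \in W) Us) A.
  apply/negP; rewrite all_count sA => /eqP e; move: cQ; by rewrite e ltnn.
case/allPn => a aA nQa; exists (z + a *: y) => W; rewrite inE => /orP[/eqP->|WUs].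
  apply/negP => h; have : z + a *: y - a *: y \in U by rewrite memvB // memvZ.
  by rewrite addrK (negbTE zU).
by apply: contra nQa => h; apply/hasP; exists W.
Qed.

Lemma ext_max (U : {vspace V}) : is_subalg br U -> U != fullv ->
  exists S, is_max_subalg br S /\ (U <= S)%VS.
Proof.
suff: forall n (U : {vspace V}), (\dim (fullv : {vspace V}) - \dim U < n)%N ->
  is_subalg br U -> U != fullv -> exists S, is_max_subalg br S /\ (U <= S)%VS.
  by apply.
elim=> // n IH {}U hlt sU pU.
case: (classic (forall U', is_subalg br U' -> (U <= U')%VS -> U' = U \/ U' = fullv)) => H.
  by exists U; split => //; split.
apply not_all_ex_not in H; case: H => U' H.
apply imply_to_and in H; case: H => sU' H.
apply imply_to_and in H; case: H => sub H.
have nUU : U' != U by apply/eqP => e; apply: H; left.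
have nUf : U' != fullv by apply/eqP => e; apply: H; right.
have lt : (\dim U < \dim U')%N.
  have [le eq] := dimv_leqif_eq sub.
  by rewrite ltn_neqAle le andbT eq eq_sym.
have le2 : (\dim U' <= \dim (fullv : {vspace V}))%N by apply: dimvS; apply: subvf.
have [S [mS sS]] := IH U' ltac:(lia) sU' nUf.
by exists S; split => //; apply: subv_trans sub sS.
Qed.

Lemma gen2 (Hn2 : ~ two_generated br) (x y : V) :
  exists U, [/\ is_subalg br U, x \in U, y \in U & U != fullv].
Proof.
apply: NNPP => H; apply: Hn2; exists x, y => U sU xU yU.
apply: NNPP => nf; apply: H; exists U; split => //; exact/eqP.
Qed.

End S.

Theorem lemma4p3 (F : fieldType) (V : vectType F) (br : V -> V -> V)
  (Hlie : is_lie_bracket br) (Hn2 : ~ two_generated br) :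
  (forall (M : {vspace V}) (x : V), is_max_subalg br M -> x \in M -> x != 0 ->
     exists S : {vspace V}, [/\ is_max_subalg br S, S != M & x \in S])
  /\
  (infinite_field F -> forall x : V, forall s : seq {vspace V},
     exists S : {vspace V}, [/\ is_max_subalg br S, x \in S & S \notin s]).
Proof.
split.
  move=> M x [sM pM mM] xM _.
  have [y yM] := exists_notin pM.
  have [U [sU xU yU pU]] := gen2 Hn2 x y.
  have [S [mS sS]] := ext_max sU pU.
  exists S; split => //; last exact: (subvP sS).
  apply/eqP => e; rewrite -e in yM.
  by rewrite (subvP sS _ yU) in yM.
move=> hF x s.
have [y hy] := avoid hF (Us := [seq S <- s | S != fullv]) ltac:(by move=> U; rewrite mem_filter => /andP[]).
have [U [sU xU yU pU]] := gen2 Hn2 x y.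
have [S [mS sS]] := ext_max sU pU.
exists S; split => //; first exact: (subvP sS).
apply/negP => Ss.
have := hy S; rewrite mem_filter Ss andbT.
case: mS => _ -> _ /(_ isT).
by rewrite (subvP sS _ yU).
Qed.
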